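(* Let $L$ be an $n\times n$ real matrix (not necessarily symmetric) with nonpositive off-diagonal entries, and let $E$ be the set of unordered pairs $\{i,j\}$, $i\ne j$, with $L_{ij}+L_{ji}<0$; assume the graph $G=(\{1,\dots,n\},E)$ is connected and that nodes $1,\dots,n_l$ ($1\le n_l<n$) are labeled with values $f(1),\dots,f(n_l)$. Consider the Harmonic Functions prediction: the minimizer $\vec f\in\mathbb R^n$ of $\sum_{i\neq j}-L_{ij}(f_i-f_j)^2$ subject to $f_i=f(i)$ for $i\le n_l$. Set edge costs $d_{ij}=-2/(L_{ij}+L_{ji})$ for $\{i,j\}\in E$. Then for every unlabeled node $p$, the flow-based prediction with $\lambda=0$ and these costs equals the Harmonic Functions value $f_p$.
   Context: Flow-based prediction: orient each edge of $G$ arbitrarily; let $A$ be the $n\times |E|$ signed incidence matrix ($A_{ie}=+1$, $A_{je}=-1$ for $e$ oriented from $i$ to $j$), $A_l$ its rows $1,\dots,n_l$ and $A_u$ its remaining rows. For unlabeled $p$, $\vec b_p\in\mathbb R^{n-n_l}$ is zero except $-1$ at the entry of $p$. For $\lambda\ge0$, $\vec x$ is the unique minimizer of $\frac12\sum_{e} d_e(x_e^2+\lambda|x_e|)$ subject to $A_u\vec x=\vec b_p$, the weights are $\vec w(p)=A_l\vec x$, and the prediction is $f(p)=\sum_{i=1}^{n_l}w_i(p)f(i)$. *)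

(* Defs.v *)
(* Nodes are 'I_n; node i (0-based) is labeled iff val i < nl
   (paper's nodes 1..n_l). *)
From HB Require Import structures.
From mathcomp Require Import all_boot all_order all_algebra.
Set Implicit Arguments. Unset Strict Implicit. Unset Printing Implicit Defensive.
Import Order.TTheory GRing.Theory Num.Theory.
Local Open Scope ring_scope.

Section Defs.
Variables (R : realFieldType) (n : nat).

Definition edgeL (L : 'M[R]_n) : rel 'I_n :=
  fun i j => (i != j) && (L i j + L j i < 0).

Definition hf_energy (L : 'M[R]_n) (f : 'I_n -> R) : R :=
  \sum_(i < n) \sum_(j < n | i != j) - L i j * (f i - f j) ^+ 2.

Definition hf_feasible (nl : nat) (flab : 'I_n -> R) (f : 'I_n -> R) : Prop :=
  forall i : 'I_n, (i < nl)%N -> f i = flab i.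

Definition hf_minimizer (L : 'M[R]_n) (nl : nat) (flab : 'I_n -> R)
    (f : 'I_n -> R) : Prop :=
  hf_feasible nl flab f /\
  forall g, hf_feasible nl flab g -> hf_energy L f <= hf_energy L g.

(* An orientation o of the edges: o i j means edge {i,j} is oriented i -> j.
   A flow x assigns x i j to the oriented edge (i,j) (values at pairs with
   ~~ o i j are irrelevant). (A x)_k = sum_{e out of k} x_e - sum_{e into k} x_e. *)
Definition incid (o : rel 'I_n) (x : 'I_n -> 'I_n -> R) (k : 'I_n) : R :=
  \sum_(j < n | o k j) x k j - \sum_(j < n | o j k) x j k.

Definition dcost (L : 'M[R]_n) (i j : 'I_n) : R := - 2 / (L i j + L j i).

Definition flow_cost (L : 'M[R]_n) (o : rel 'I_n) (lambda : R)
    (x : 'I_n -> 'I_n -> R) : R :=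
  2^-1 * \sum_(i < n) \sum_(j < n | o i j)
           dcost L i j * (x i j ^+ 2 + lambda * `|x i j|).

Definition flow_feasible (o : rel 'I_n) (nl : nat) (p : 'I_n)
    (x : 'I_n -> 'I_n -> R) : Prop :=
  forall k : 'I_n, (nl <= k)%N -> incid o x k = (if k == p then -1 else 0).

Definition flow_minimizer (L : 'M[R]_n) (o : rel 'I_n) (lambda : R)
    (nl : nat) (p : 'I_n) (x : 'I_n -> 'I_n -> R) : Prop :=
  flow_feasible o nl p x /\
  forall y, flow_feasible o nl p y -> flow_cost L o lambda x <= flow_cost L o lambda y.

Definition flow_prediction (o : rel 'I_n) (nl : nat) (flab : 'I_n -> R)
    (x : 'I_n -> 'I_n -> R) : R :=
  \sum_(i < n | (i < nl)%N) incid o x i * flab i.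

End Defs.

(* Main.v *)
Require Import Defs.
From HB Require Import structures.
From mathcomp Require Import all_boot all_order all_algebra.
From mathcomp Require Import ring lra.
Set Implicit Arguments. Unset Strict Implicit. Unset Printing Implicit Defensive.
Import Order.TTheory GRing.Theory Num.Theory.
Local Open Scope ring_scope.

Section Aux.
Variables (R : realFieldType) (n nl : nat) (L : 'M[R]_n) (o : rel 'I_n).
Hypothesis HL : forall i j : 'I_n, i != j -> L i j <= 0.
Hypothesis Hconn : forall i j : 'I_n, connect (edgeL L) i j.
Hypothesis Hnl0 : (0 < nl)%N.
Hypothesis Hnln : (nl < n)%N.
Hypothesis Ho1 : forall i j : 'I_n, o i j -> edgeL L i j.
Hypothesis Ho2 : forall i j : 'I_n, edgeL L i j -> o i j = ~~ o j i.

Definition w (i j : 'I_n) : R := if i == j then 0 else - (L i j + L j i).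
Definition Lap (V : 'I_n -> R) k := \sum_(j < n) w k j * (V k - V j).

Lemma w_sym i j : w i j = w j i.
Proof. rewrite /w eq_sym; case: eqP => // _; by rewrite addrC. Qed.

Lemma w_ge0 i j : 0 <= w i j.
Proof.
rewrite /w; case: eqP => // /eqP hij; rewrite oppr_ge0.
have := HL hij; have := HL (j:=i) (i:=j); rewrite eq_sym hij => /(_ isT); lra.
Qed.

Lemma edge_sym i j : edgeL L i j = edgeL L j i.
Proof. by rewrite /edgeL eq_sym addrC. Qed.

Lemma w_edge i j : edgeL L i j -> 0 < w i j.
Proof. by rewrite /edgeL /w => /andP [/negbTE -> h]; rewrite oppr_gt0. Qed.

Lemma w_nedge i j : ~~ edgeL L i j -> w i j = 0.
Proof.
rewrite /edgeL /w negb_and negbK; case: eqP => //= /eqP hij; rewrite -leNgt => h.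
have := HL hij; have := HL (j:=i) (i:=j); rewrite eq_sym hij => /(_ isT) h1 h2.
apply/eqP; rewrite oppr_eq0; apply/eqP; lra.
Qed.

Lemma dcost_w i j : edgeL L i j -> dcost L i j * w i j = 2.
Proof.
move=> e; have := w_edge e; rewrite /dcost /w; move: e => /andP [/negbTE -> _] h.
have hs : L i j + L j i != 0 by apply/eqP => hh; move: h; rewrite hh oppr0 ltxx.
by field.
Qed.

Lemma dcost_ge0 i j : edgeL L i j -> 0 <= dcost L i j.
Proof.
move=> e; have := dcost_w e; have := w_edge e => h1 h2.
have : 0 < dcost L i j * w i j by rewrite h2.
by rewrite pmulr_lgt0 // => /ltW.
Qed.

Lemma split_row k (G : 'I_n -> R) : (forall j, ~~ edgeL L k j -> G j = 0) ->
  \sum_(j < n) G j = \sum_(j < n | o k j) G j + \sum_(j < n | o j k) G j.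
Proof.
move=> HG; rewrite (bigID (o k)) /=; congr (_ + _).
rewrite (bigID (fun j => o j k)) /= [X in _ + X]big1 ?addr0.
  apply: eq_bigl => j; case okj: (o k j) => //=.
  by have := Ho1 okj; rewrite edge_sym => /Ho2 ->; rewrite okj.
move=> j /andP [h1 h2]; apply: HG; apply/negP => e.
by move: (Ho2 e) h1 h2; case: (o k j); case: (o j k).
Qed.

Lemma swap2 (P : 'I_n -> 'I_n -> bool) (F : 'I_n -> 'I_n -> R) :
  \sum_(i < n) \sum_(j < n | P i j) F i j = \sum_(j < n) \sum_(i < n | P i j) F i j.
Proof. by rewrite (exchange_big_dep xpredT) //=. Qed.

Lemma parts (x : 'I_n -> 'I_n -> R) (g : 'I_n -> R) :
  \sum_(k < n) incid o x k * g k = \sum_(i < n) \sum_(j < n | o i j) x i j * (g i - g j).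
Proof.
rewrite /incid.
under eq_bigr do rewrite mulrBl !mulr_suml.
rewrite sumrB (swap2 (fun k j => o j k)).
rewrite -sumrB; apply: eq_bigr => i _; rewrite -sumrB.
by apply: eq_bigr => j _; rewrite mulrBr.
Qed.


Lemma incid_lin (x y : 'I_n -> 'I_n -> R) t k :
  incid o (fun i j => x i j + t * y i j) k = incid o x k + t * incid o y k.
Proof.
rewrite /incid !big_split /= -!mulr_sumr; ring.
Qed.

Lemma incid_pot (phi : 'I_n -> R) k :
  incid o (fun i j => w i j * (phi i - phi j) / 2) k = Lap phi k / 2.
Proof.
rewrite /incid /Lap mulr_suml (split_row (k:=k) (G := fun j => w k j * (phi k - phi j) / 2)).
  congr (_ + _); rewrite -sumrN; apply: eq_bigr => j _; rewrite w_sym; ring.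
by move=> j /w_nedge ->; rewrite !mul0r.
Qed.

Definition Ew (f : 'I_n -> R) := 2^-1 * \sum_(i < n) \sum_(j < n) w i j * (f i - f j) ^+ 2.

Lemma energy_w f : hf_energy L f = Ew f.
Proof.
rewrite /hf_energy /Ew.
set A := \sum_(i < n) _.
have hA : A = \sum_(i < n) \sum_(j < n | i != j) - L j i * (f i - f j) ^+ 2.
  rewrite /A (swap2 (fun i j => i != j)); apply: eq_bigr => i _.
  apply: eq_big => [j|j _]; first by rewrite eq_sym.
  congr (_ * _); ring.
have -> : \sum_(i < n) \sum_(j < n) w i j * (f i - f j) ^+ 2 = A + A.
  rewrite {2}hA /A -big_split /=; apply: eq_bigr => i _.
  rewrite -big_split /= [RHS]big_mkcond /=; apply: eq_bigr => j _.
  rewrite /w eq_sym; case: eqP => _ /=; ring.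
by field.
Qed.

Lemma sym_cross (f h : 'I_n -> R) :
  \sum_(i < n) \sum_(j < n) w i j * (f i - f j) * (h i - h j) =
  2 * \sum_(i < n) h i * Lap f i.
Proof.
set S := \sum_(i < n) h i * Lap f i.
have hS : S = \sum_(i < n) \sum_(j < n) w i j * (f i - f j) * h i.
  rewrite /S; apply: eq_bigr => i _; rewrite /Lap mulr_sumr.
  by apply: eq_bigr => j _; ring.
have hS' : S = \sum_(i < n) \sum_(j < n) - (w i j * (f i - f j) * h j).
  rewrite hS exchange_big /=; apply: eq_bigr => i _; apply: eq_bigr => j _.
  rewrite w_sym; ring.
rewrite mulr2n mulrDl mul1r {1}hS hS' -big_split /=; apply: eq_bigr => i _.
rewrite -big_split /=; apply: eq_bigr => j _; ring.
Qed.

Lemma Ew_expand (f h : 'I_n -> R) t :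
  Ew (fun i => f i + t * h i) = Ew f + 2 * t * \sum_(i < n) h i * Lap f i + t ^+ 2 * Ew h.
Proof.
rewrite /Ew.
have -> : \sum_(i < n) \sum_(j < n) w i j * (f i + t * h i - (f j + t * h j)) ^+ 2 =
  \sum_(i < n) \sum_(j < n) w i j * (f i - f j) ^+ 2
  + 2 * t * \sum_(i < n) \sum_(j < n) w i j * (f i - f j) * (h i - h j)
  + t ^+ 2 * \sum_(i < n) \sum_(j < n) w i j * (h i - h j) ^+ 2.
  rewrite !mulr_sumr -!big_split /=; apply: eq_bigr => i _.
  rewrite !mulr_sumr -!big_split /=; apply: eq_bigr => j _.
  ring.
rewrite sym_cross; by field.
Qed.

Lemma Ew_ge0 h : 0 <= Ew h.
Proof.
rewrite /Ew mulr_ge0 ?invr_ge0 ?ler0n //; apply: sumr_ge0 => i _; apply: sumr_ge0 => j _.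
by rewrite mulr_ge0 ?w_ge0 ?sqr_ge0.
Qed.

Lemma quad0 (a b : R) : 0 <= a -> (forall t, 0 <= b * t + a * t ^+ 2) -> b = 0.
Proof.
move=> ha H; apply/eqP; apply: contraT => hb.
pose c := (a + 1)^-1.
have hc : 0 < c by rewrite /c invr_gt0; lra.
have hc1 : c * (a + 1) = 1 by rewrite /c mulVf //; apply/eqP => h; lra.
have hb2 : 0 < b ^+ 2 by rewrite exprn_even_gt0.
have := H (- b * c).
have -> : b * (- b * c) + a * (- b * c) ^+ 2 = - (b ^+ 2 * c) * (1 - a * c).
  ring.
have -> : 1 - a * c = c by rewrite -hc1; ring.
by rewrite mulNr oppr_ge0 leNgt (mulr_gt0 (mulr_gt0 hb2 hc) hc).
Qed.

Lemma kernel0 (V : 'I_n -> R) :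
  (forall i : 'I_n, (i < nl)%N -> V i = 0) ->
  (forall k : 'I_n, (nl <= k)%N -> Lap V k = 0) ->
  forall i, V i = 0.
Proof.
move=> H1 H2.
have S0 : \sum_(i < n) V i * Lap V i = 0.
  apply: big1 => i _; case: (ltnP i nl) => hi; first by rewrite H1 ?mul0r.
  by rewrite H2 ?mulr0.
have := sym_cross V V; rewrite S0 mulr0 => HS.
have nn : forall i j, 0 <= w i j * (V i - V j) * (V i - V j).
  by move=> i j; rewrite -mulrA mulr_ge0 ?w_ge0 // -expr2 sqr_ge0.
have Hrow := psumr_eq0P (P := xpredT) (fun i _ => sumr_ge0 _ (fun j _ => nn i j)) HS.
have Hedge : forall i j, edgeL L i j -> V i = V j.
  move=> i j e.
  have := psumr_eq0P (P := xpredT) (fun j _ => nn i j) (Hrow i isT) (i:=j) isT.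
  rewrite -mulrA; move/eqP.
  rewrite mulf_eq0 (negbTE (lt0r_neq0 (w_edge e))) /= mulf_eq0 orbb subr_eq0.
  by move/eqP.
have n0 : (0 < n)%N by apply: ltn_trans Hnln.
pose i0 : 'I_n := Ordinal n0.
have Vi0 : V i0 = 0 by apply: H1.
move=> i; rewrite -Vi0; have := Hconn i0 i.
move/connectP => [q pq ->]; elim: q i0 pq {Vi0} => [|y q IH] x //= /andP [exy pq].
by rewrite (Hedge _ _ exy); apply: IH.
Qed.

Definition Kmx : 'M[R]_n :=
  \matrix_(j, i) (if (i < nl)%N then (j == i)%:R
                  else (j == i)%:R * (\sum_(l < n) w i l) - w i j).

Lemma sum_delta (F : 'I_n -> R) i : \sum_(j < n) F j * (j == i)%:R = F i.
Proof.
rewrite (bigD1 i) //= eqxx mulr1 big1 ?addr0 //.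
by move=> j /negbTE ->; rewrite mulr0.
Qed.

Lemma Kmx_mul (V : 'rV[R]_n) i :
  (V *m Kmx) 0 i = if (i < nl)%N then V 0 i else Lap (fun j => V 0 j) i.
Proof.
rewrite mxE; case: ifP => hi.
  under eq_bigr do rewrite mxE hi.
  by rewrite sum_delta.
under eq_bigr do rewrite mxE hi mulrBr mulrA.
rewrite sumrB -mulr_suml sum_delta.
rewrite /Lap mulr_sumr -sumrB; apply: eq_bigr => j _; rewrite w_sym; ring.
Qed.

Lemma Kmx_unit : Kmx \in unitmx.
Proof.
rewrite -row_free_unit -kermx_eq0; apply/eqP/row_matrixP => r; rewrite row0.
have : row r (kermx Kmx) *m Kmx = 0 by apply/sub_kermxP; exact: row_sub.
set V := row r _ => HV.
suff H : forall j, V 0 j = 0 by apply/rowP => i; rewrite H mxE.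
apply: kernel0 => [j hj|k hk].
  by have := Kmx_mul V j; rewrite HV hj mxE.
by have := Kmx_mul V k; rewrite HV mxE ltnNge hk /=.
Qed.

Lemma solve (a c : 'I_n -> R) : exists V : 'I_n -> R,
  (forall i : 'I_n, (i < nl)%N -> V i = a i) /\
  (forall k : 'I_n, (nl <= k)%N -> Lap V k = c k).
Proof.
pose b : 'rV[R]_n := \row_i (if (i < nl)%N then a i else c i).
pose Vm := b *m invmx Kmx.
have HV : Vm *m Kmx = b by rewrite /Vm -mulmxA mulVmx ?Kmx_unit // mulmx1.
exists (fun j => Vm 0 j); split.
  by move=> i hi; have := Kmx_mul Vm i; rewrite HV hi mxE hi.
by move=> k hk; have := Kmx_mul Vm k; rewrite HV ltnNge hk /= mxE ltnNge hk.
Qed.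

Definition Cq (x : 'I_n -> 'I_n -> R) :=
  2^-1 * \sum_(i < n) \sum_(j < n | o i j) dcost L i j * x i j ^+ 2.
Definition Qf (x y : 'I_n -> 'I_n -> R) :=
  \sum_(i < n) \sum_(j < n | o i j) dcost L i j * x i j * y i j.

Lemma flow_cost_eq x : flow_cost L o 0 x = Cq x.
Proof.
rewrite /flow_cost /Cq; congr (_ * _); apply: eq_bigr => i _; apply: eq_bigr => j _.
by rewrite mul0r addr0.
Qed.

Lemma Cq_expand x y t :
  Cq (fun i j => x i j + t * y i j) = Cq x + t * Qf x y + t ^+ 2 * Cq y.
Proof.
rewrite /Cq /Qf.
have -> : \sum_(i < n) \sum_(j < n | o i j) dcost L i j * (x i j + t * y i j) ^+ 2 =
  \sum_(i < n) \sum_(j < n | o i j) dcost L i j * x i j ^+ 2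
  + 2 * t * \sum_(i < n) \sum_(j < n | o i j) dcost L i j * x i j * y i j
  + t ^+ 2 * \sum_(i < n) \sum_(j < n | o i j) dcost L i j * y i j ^+ 2.
  rewrite !mulr_sumr -!big_split /=; apply: eq_bigr => i _.
  rewrite !mulr_sumr -!big_split /=; apply: eq_bigr => j _.
  ring.
by field.
Qed.

Lemma Cq_ge0 y : 0 <= Cq y.
Proof.
rewrite /Cq mulr_ge0 ?invr_ge0 ?ler0n //; apply: sumr_ge0 => i _; apply: sumr_ge0 => j hj.
by rewrite mulr_ge0 ?dcost_ge0 ?Ho1 ?sqr_ge0.
Qed.

Lemma Qf_pot x (phi : 'I_n -> R) :
  Qf x (fun i j => w i j * (phi i - phi j) / 2) = \sum_(k < n) incid o x k * phi k.
Proof.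
rewrite parts /Qf; apply: eq_bigr => i _; apply: eq_bigr => j hj.
have hd := dcost_w (Ho1 hj).
have -> : dcost L i j * x i j * (w i j * (phi i - phi j) / 2) =
  (dcost L i j * w i j) * (x i j * (phi i - phi j)) / 2 by ring.
by rewrite hd; field.
Qed.

Lemma Qf_sym x y : Qf x y = Qf y x.
Proof. by rewrite /Qf; apply: eq_bigr => i _; apply: eq_bigr => j _; ring. Qed.

Lemma main_aux (flab : 'I_n -> R) (p : 'I_n) : (nl <= p)%N ->
  (exists f, hf_minimizer L nl flab f) /\
  (exists x, flow_minimizer L o 0 nl p x) /\
  (forall f x, hf_minimizer L nl flab f -> flow_minimizer L o 0 nl p x ->
     flow_prediction o nl flab x = f p).
Proof.
move=> Hp; split.
  have [V [HV1 HV2]] := solve flab (fun _ => 0).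
  exists V; split; first by [].
  move=> g hg; rewrite !energy_w.
  have -> : Ew g = Ew (fun i => V i + 1 * (g i - V i)).
    rewrite /Ew; congr (_ * _); apply: eq_bigr => i _; apply: eq_bigr => j _.
    congr (_ * _); congr (_ ^+ 2); ring.
  rewrite Ew_expand big1 ?mulr0 ?addr0 ?expr1n ?mul1r ?lerDl ?Ew_ge0 //.
  move=> i _; case: (ltnP i nl) => hi.
    by rewrite hg // HV1 // subrr mul0r.
  by rewrite HV2 // mulr0.
split.
  have [mu [Hm1 Hm2]] := solve (fun _ => 0) (fun k => if k == p then -2 else 0).
  pose x := fun i j => w i j * (mu i - mu j) / 2.
  have hx : flow_feasible o nl p x.
    move=> k hk; rewrite /x incid_pot Hm2 //.
    by case: (k == p); [field | rewrite mul0r].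
  exists x; split => // y hy; rewrite !flow_cost_eq.
  pose z := fun i j => y i j + (-1) * x i j.
  have -> : Cq y = Cq (fun i j => x i j + 1 * z i j).
    rewrite /Cq; congr (_ * _); apply: eq_bigr => i _; apply: eq_bigr => j _.
    rewrite /z; congr (_ * _); congr (_ ^+ 2); ring.
  rewrite Cq_expand.
  have -> : Qf x z = 0.
    rewrite Qf_sym Qf_pot big1 // => k _; case: (ltnP k nl) => hk.
      by rewrite Hm1 // mulr0.
    by rewrite /z incid_lin hy // hx // mulN1r subrr mul0r.
  by rewrite mulr0 addr0 expr1n mul1r lerDl Cq_ge0.
move=> f x [hf hfmin] [hx hxmin].
have Hh : forall k : 'I_n, (nl <= k)%N -> Lap f k = 0.
  move=> k hk.
  suff : 2 * Lap f k = 0 by move/eqP; rewrite mulf_eq0 pnatr_eq0 /= => /eqP.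
  apply: (quad0 (a := Ew (fun i => (i == k)%:R))); first exact: Ew_ge0.
  move=> t; have := hfmin (fun i => f i + t * (i == k)%:R).
  rewrite !energy_w Ew_expand.
  have -> : \sum_(i < n) (i == k)%:R * Lap f i = Lap f k.
    by rewrite -[RHS](sum_delta (fun i => Lap f i)); apply: eq_bigr => i _; rewrite mulrC.
  move=> h.
  have -> : 2 * Lap f k * t + Ew (fun i => (i == k)%:R) * t ^+ 2 =
    (Ew f + 2 * t * Lap f k + t ^+ 2 * Ew (fun i => (i == k)%:R)) - Ew f by ring.
  rewrite subr_ge0; apply: h => i hi.
  have hik : (i == k) = false.
    by apply/negbTE/negP => /eqP e; rewrite e in hi; move: (leq_trans hi hk); rewrite ltnn.
  by rewrite hik mulr0 addr0 hf.
pose y := fun i j => w i j * (f i - f j) / 2.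
have HQ : Qf x y = 0.
  apply: (quad0 (a := Cq y)); first exact: Cq_ge0.
  move=> t; have := hxmin (fun i j => x i j + t * y i j).
  rewrite !flow_cost_eq Cq_expand => h.
  have -> : Qf x y * t + Cq y * t ^+ 2 = (Cq x + t * Qf x y + t ^+ 2 * Cq y) - Cq x by ring.
  rewrite subr_ge0; apply: h => k hk.
  by rewrite incid_lin hx // /y incid_pot Hh // mul0r mulr0 addr0.
move: HQ; rewrite /y Qf_pot (bigID (fun k : 'I_n => (k < nl)%N)) /=.
have -> : \sum_(k < n | (k < nl)%N) incid o x k * f k = flow_prediction o nl flab x.
  by apply: eq_bigr => k hk; rewrite hf.
rewrite (bigD1 p) /=; last by rewrite -leqNgt.
rewrite hx // eqxx big1 ?addr0; first by move=> h; apply/eqP; rewrite -subr_eq0; apply/eqP; rewrite -h; ring.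
move=> k /andP [hk hkp]; rewrite hx ?(negbTE hkp) ?mul0r //.
by rewrite leqNgt.
Qed.

End Aux.

Theorem mainTheorem2 (R : realFieldType) (n nl : nat) (L : 'M[R]_n)
    (o : rel 'I_n) (flab : 'I_n -> R) (p : 'I_n) :
  (forall i j : 'I_n, i != j -> L i j <= 0) ->
  (forall i j : 'I_n, connect (edgeL L) i j) ->
  (0 < nl)%N -> (nl < n)%N ->
  (forall i j : 'I_n, o i j -> edgeL L i j) ->
  (forall i j : 'I_n, edgeL L i j -> o i j = ~~ o j i) ->
  (nl <= p)%N ->
  (exists f, hf_minimizer L nl flab f) /\
  (exists x, flow_minimizer L o 0 nl p x) /\
  (forall f x, hf_minimizer L nl flab f -> flow_minimizer L o 0 nl p x ->
     flow_prediction o nl flab x = f p).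
Proof.
move=> HL Hc Hnl0 Hnln Ho1 Ho2 Hp.
by apply: (main_aux (R:=R) (L:=L) (o:=o) HL Hc Hnl0 Hnln Ho1 Ho2 flab Hp).
Qed.
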